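(* The category $\mathbb S^{\mathrm{m},\mathbb P}_r$ is $\mathbf{Ord}$-enriched, i.e. its sequential composition $;$ is monotone in both arguments with respect to the orders on hom-sets. Moreover, the sum $\oplus$ and the trace operator $\mathrm{tr}$ are monotone.
   Context: Notation: $[k]=\{1,\dots,k\}$; $T(X)=X+\mathbb R\times X+\{\exists^*,\forall^*\}$; diagrammatic composition. $\mathbb S^{\mathrm{m},\mathbb P}_r$ has natural numbers as objects; an arrow $f:m\to n$ is a function $f:[m]\to T([n])$ such that for all $i\ne j$ in $[m]$, $f(i)\notin[n]$ or $f(j)\notin\{f(i)\}\cup\mathbb R\times\{f(i)\}$. On $T([n])$ let $\le$ be the least order with $(r_1,i)\le(r_2,i)$ whenever $r_1\ge r_2$ and $i\in[n]$, $\exists^*\le z$ and $z\le\forall^*$ for all $z\in T([n])$; hom-sets are ordered pointwise ($f\le g$ iff $f(i)\le g(i)$ for all $i$). Operations: $(f;g)(i)=f(i)$ if $f(i)\in\{\exists^*,\forall^*\}$; $g(j)$ if $f(i)=j\in[l]$; $g(j)$ if $f(i)=(r,j)$ and $g(j)\in\{\exists^*,\forall^*\}$; $(r,k)$ if $f(i)=(r,j)$, $g(j)=k$; $(r+r',k)$ if $f(i)=(r,j)$, $g(j)=(r',k)$. $(f\oplus g)(i)=f(i)$ ($i\le m$), $(f\oplus g)(m+i)$ is $g(i)$ with its index $j$ (if any) shifted to $n+j$ (for $f:m\to n$). Trace of $f:l+m\to l+n$ at $i\in[m]$: $v_0=l+i$; if $j=0$ or $v_j\in[l]$ then $v_{j+1}=f(v_j)$;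 if $v_j=(r,k)$, $k\in[l]$, then $v_{j+1}=f(k)$; otherwise stop at $v_j$. If finite $(v_0,..,v_K)$ and $S$ is the sum of first components of $v_j\in\mathbb R\times[l+n]$, $1\le j\le K$: value $v_K$ if $v_K\in\{\exists^*,\forall^*\}$; $k$ if $v_K=l+k$ and $v_j\in[l]$ for $1\le j<K$; $(S,k)$ if $v_K=l+k$ and some earlier $v_j\in\mathbb R\times[l]$; $(S,k)$ if $v_K=(r,l+k)$. If infinite, with $w'_1,w'_2,..$ the first components of the (infinitely many) entries in $\mathbb R\times[l]$: $\exists^*$ if $\liminf_N\frac1N\sum_{t\le N}w'_t\ge0$, else $\forall^*$. *)

(* Defs.v *)
From Stdlib Require Import Reals ClassicalEpsilon.
From Coquelicot Require Import Coquelicot.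
From mathcomp Require Import ssreflect ssrfun ssrbool eqtype ssrnat seq fintype.

Set Implicit Arguments.
Unset Strict Implicit.
Unset Printing Implicit Defensive.

(* [n] = {1,..,n} is represented by the ordinal type 'I_n = {0,..,n-1}.   *)
Inductive T (X : Type) : Type :=
  | Idx : X -> T X
  | Wt  : R -> X -> T X
  | Ex  : T X
  | All : T X.
Arguments Ex {X}.
Arguments All {X}.

Definition Tmap (X Y : Type) (h : X -> Y) (x : T X) : T Y :=
  match x with
  | Idx k => Idx (h k)
  | Wt r k => Wt r (h k)
  | Ex => Ex
  | All => All
  end.

Definition rawhom (m n : nat) := 'I_m -> T 'I_n.

Definition is_arrow (m n : nat) (f : rawhom m n) : Prop :=
  forall (i j : 'I_m) (k : 'I_n), i <> j -> f i = Idx k ->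
    f j <> Idx k /\ (forall r : R, f j <> Wt r k).

(* The order on T([n]): least order with (r1,i) <= (r2,i) when r1 >= r2,
   exists* <= z, z <= forall*.  (This relation is already reflexive,
   antisymmetric and transitive, so it is that least order.) *)
Definition leT (X : Type) (x y : T X) : Prop :=
  x = y
  \/ (exists (r1 r2 : R) (k : X), x = Wt r1 k /\ y = Wt r2 k /\ (r1 >= r2)%R)
  \/ x = Ex
  \/ y = All.

Definition le_hom (m n : nat) (f g : rawhom m n) : Prop :=
  forall i : 'I_m, leT (f i) (g i).

Definition seqcomp (m l n : nat) (f : rawhom m l) (g : rawhom l n) : rawhom m n :=
  fun i =>
    match f i with
    | Ex => Ex
    | All => All
    | Idx j => g j
    | Wt r j =>
        match g j with
        | Ex => Ex
        | All => All
        | Idx k => Wt r k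
        | Wt r' k => Wt (r + r')%R k
        end
    end.

Definition osum (m n m' n' : nat) (f : rawhom m n) (g : rawhom m' n')
  : rawhom (m + m') (n + n') :=
  fun i =>
    match split i with
    | inl j => Tmap (lshift n') (f j)
    | inr j => Tmap (@rshift n n') (g j)
    end.

Section Trace.
Variables (l m n : nat) (f : rawhom (l + m) (l + n)) (i : 'I_m).

(* One step of the trace walk; None = stop. *)
Definition tr_next (x : T 'I_(l + n)) : option (T 'I_(l + n)) :=
  match x with
  | Idx k | Wt _ k =>
      match split k with
      | inl k' => Some (f (lshift m k'))
      | inr _ => None
      end
  | _ => None
  end.

(* tr_v j is the paper's v_{j+1}  (v_0 = l+i, v_1 = f(l+i)).
   Once stopped, the sequence stays constant. *)
Fixpoint tr_v (j : nat) : T 'I_(l + n) :=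
  match j with
  | O => f (@rshift l m i)
  | S j' => match tr_next (tr_v j') with Some y => y | None => tr_v j' end
  end.

Definition stopb (p : nat) : bool :=
  match tr_next (tr_v p) with None => true | Some _ => false end.

Definition wt_of (X : Type) (x : T X) : R :=
  match x with Wt r _ => r | _ => 0%R end.

Definition is_wtb (X : Type) (x : T X) : bool :=
  match x with Wt _ _ => true | _ => false end.

Definition is_idxb (X : Type) (x : T X) : bool :=
  match x with Idx _ => true | _ => false end.

(* Value in the finite case, with p + 1 = K (so v_K = tr_v p). *)
Definition tr_finite_value (p : nat) : T 'I_n :=
  let S := foldr (fun j acc => (wt_of (tr_v j) + acc)%R) 0%R (iota 0 p.+1) in
  match tr_v p with
  | Ex => Ex
  | All => All
  | Idx k =>
      match split k with
      | inr k' =>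
          if all (fun q => is_idxb (tr_v q)) (iota 0 p) then Idx k' else Wt S k'
      | inl _ => Ex (* unreachable: the walk stops only outside [l] *)
      end
  | Wt _ k =>
      match split k with
      | inr k' => Wt S k'
      | inl _ => Ex (* unreachable *)
      end
  end.

Definition next_wt (j : nat) : nat :=
  match excluded_middle_informative (exists j', (j <= j')%N && is_wtb (tr_v j')) with
  | left H => ex_minn H
  | right _ => 0
  end.

Fixpoint wt_pos (t : nat) : nat :=
  match t with
  | O => next_wt 0
  | S t' => next_wt (wt_pos t').+1
  end.

Definition wprime (t : nat) : R := wt_of (tr_v (wt_pos t)).

Definition wavg (N : nat) : R := (sum_f_R0 wprime N / INR N.+1)%R.

Definition trace_at : T 'I_n :=
  match excluded_middle_informative (exists p, stopb p) with
  | left H => tr_finite_value (ex_minn H)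
  | right _ =>
      if excluded_middle_informative (Rbar_le (Rbar.Finite 0%R) (LimInf_seq wavg))
      then Ex else All
  end.

End Trace.

Definition trace (l m n : nat) (f : rawhom (l + m) (l + n)) : rawhom m n :=
  fun i => trace_at f i.

(* Main.v *)
Require Import Defs.
From Stdlib Require Import Reals.
From mathcomp Require Import ssreflect ssrfun ssrbool eqtype ssrnat fintype.
From Stdlib Require Import ClassicalEpsilon Classical Lra.
From Coquelicot Require Import Coquelicot.
From mathcomp Require Import seq.

Lemma seq_mono (m l n : nat) (f f' : rawhom m l) (g g' : rawhom l n) :
  le_hom f f' -> le_hom g g' -> le_hom (seqcomp f g) (seqcomp f' g').
Proof.
move=> Hf Hg i; rewrite /seqcomp.
case: (Hf i) => [E|[[r1 [r2 [k [E1 [E2 Hr]]]]]|[E|E]]].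
- rewrite -E; case: (f i) => [j|r j| |]; try (by left).
  + exact: Hg.
  + case: (Hg j) => [E'|[[s1 [s2 [k [E1 [E2 Hs]]]]]|[E'|E']]].
    * rewrite -E'; by left.
    * rewrite E1 E2; right; left; exists (r + s1)%R, (r + s2)%R, k.
      split; [done|split; [done|lra]].
    * rewrite E'; right; right; left; done.
    * rewrite E'; right; right; right; done.
- rewrite E1 E2.
  case: (Hg k) => [E'|[[s1 [s2 [k' [E1' [E2' Hs]]]]]|[E'|E']]].
  + rewrite -E'; case: (g k) => [j|s j| |]; try (by left).
    * right; left; exists r1, r2, j; done.
    * right; left; exists (r1 + s)%R, (r2 + s)%R, j.
      split; [done|split; [done|lra]].
  + rewrite E1' E2'; right; left; exists (r1 + s1)%R, (r2 + s2)%R, k'.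
    split; [done|split; [done|lra]].
  + rewrite E'; right; right; left; done.
  + rewrite E'; right; right; right; done.
- rewrite E; right; right; left; done.
- rewrite E; right; right; right; done.
Qed.

Lemma leT_map (X Y : Type) (h : X -> Y) x y : leT x y -> leT (Tmap h x) (Tmap h y).
Proof.
case=> [->|[[r1 [r2 [k [E1 [E2 Hr]]]]]|[E|E]]].
- by left.
- rewrite E1 E2 /=; right; left; by exists r1, r2, (h k).
- rewrite E; right; right; left; done.
- rewrite E; right; right; right; done.
Qed.

Lemma osum_mono (m n m' n' : nat) (f f' : rawhom m n) (g g' : rawhom m' n') :
  le_hom f f' -> le_hom g g' -> le_hom (osum f g) (osum f' g').
Proof.
move=> Hf Hg i; rewrite /osum; case: (split i) => j; exact: leT_map.
Qed.

Section Tr.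
Variables (l m n : nat) (f f' : rawhom (l + m) (l + n)).
Hypothesis Hle : le_hom f f'.
Variable i : 'I_m.

Lemma leT_step j : leT (tr_v f i j) (tr_v f' i j).
Proof.
elim: j => [|j IH] /=; first exact: Hle.
case: IH => [E|[[r1 [r2 [k [E1 [E2 Hr]]]]]|[E|E]]].
- rewrite -E; case: (tr_v f i j) => [k|r k| |] /=; try (by left);
  case: (split k) => k'; try (by left); exact: Hle.
- rewrite E1 E2 /=; case: (split k) => k'; first exact: Hle.
  right; left; by exists r1, r2, k.
- rewrite E /=; right; right; left; done.
- rewrite E /=; right; right; right; done.
Qed.

Lemma stay (g : rawhom (l + m) (l + n)) p :
  stopb g i p -> forall k : nat, (p <= k)%N -> tr_v g i k = tr_v g i p.
Proof.
move=> Hs; elim=> [|k IH]; first by rewrite leqn0 => /eqP ->.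
rewrite leq_eqVlt => /orP [/eqP <- //|Hk].
have Ek := IH Hk. rewrite /=. move: Hs; rewrite /stopb -Ek.
by case: (tr_next g (tr_v g i k)).
Qed.

Lemma trace_Ex (g : rawhom (l + m) (l + n)) j : tr_v g i j = Ex -> trace g i = Ex.
Proof.
move=> Ej.
have Sj : stopb g i j by rewrite /stopb Ej.
rewrite /trace /trace_at.
case: excluded_middle_informative => [H|H]; last by exfalso; apply: H; exists j.
case: ex_minnP => p Hp Hmin.
have Ep : tr_v g i p = Ex by rewrite -(@stay g p Hp j (Hmin _ Sj)).
by rewrite /tr_finite_value Ep.
Qed.

Lemma trace_All (g : rawhom (l + m) (l + n)) j : tr_v g i j = All -> trace g i = All.
Proof.
move=> Ej.
have Sj : stopb g i j by rewrite /stopb Ej.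
rewrite /trace /trace_at.
case: excluded_middle_informative => [H|H]; last by exfalso; apply: H; exists j.
case: ex_minnP => p Hp Hmin.
have Ep : tr_v g i p = All by rewrite -(@stay g p Hp j (Hmin _ Sj)).
by rewrite /tr_finite_value Ep.
Qed.

Hypothesis NoEx : forall j, tr_v f i j <> Ex.
Hypothesis NoAll : forall j, tr_v f' i j <> All.

Lemma shape j : (exists k, tr_v f i j = Idx k /\ tr_v f' i j = Idx k) \/
  (exists r1 r2 k, tr_v f i j = Wt r1 k /\ tr_v f' i j = Wt r2 k /\ (r1 >= r2)%R).
Proof.
have := NoEx j; have := NoAll j.
case: (leT_step j) => [E|[H|[E|E]]] //.
- rewrite -E; case: (tr_v f i j) => [k|r k| |] // _ _.
  + by left; exists k.
  + right; exists r, r, k; split; [done|split; [done|lra]].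
- by right.
Qed.

Lemma stop_eq p : stopb f i p = stopb f' i p.
Proof.
rewrite /stopb; case: (shape p) => [[k [E1 E2]]|[r1 [r2 [k [E1 [E2 _]]]]]];
rewrite E1 E2 /=; by case: (split k).
Qed.

Lemma wtb_eq p : is_wtb (tr_v f i p) = is_wtb (tr_v f' i p).
Proof.
by case: (shape p) => [[k [E1 E2]]|[r1 [r2 [k [E1 [E2 _]]]]]]; rewrite E1 E2.
Qed.

Lemma idxb_eq p : is_idxb (tr_v f i p) = is_idxb (tr_v f' i p).
Proof.
by case: (shape p) => [[k [E1 E2]]|[r1 [r2 [k [E1 [E2 _]]]]]]; rewrite E1 E2.
Qed.

Lemma wt_ge p : (wt_of (tr_v f i p) >= wt_of (tr_v f' i p))%R.
Proof.
case: (shape p) => [[k [E1 E2]]|[r1 [r2 [k [E1 [E2 H]]]]]]; rewrite E1 E2 /=; lra.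
Qed.

Lemma next_wt_eq j : next_wt f i j = next_wt f' i j.
Proof.
rewrite /next_wt.
case: excluded_middle_informative => [H|H];
case: excluded_middle_informative => [H'|H'] //.
- case: ex_minnP => a Ha Hma; case: ex_minnP => b Hb Hmb.
  apply/eqP; rewrite eqn_leq; apply/andP; split.
  + apply: Hma; by rewrite wtb_eq.
  + apply: Hmb; by rewrite -wtb_eq.
- exfalso; apply: H'; case: H => j' Hj; exists j'; by rewrite -wtb_eq.
- exfalso; apply: H; case: H' => j' Hj; exists j'; by rewrite wtb_eq.
Qed.

Lemma wt_pos_eq t : wt_pos f i t = wt_pos f' i t.
Proof. elim: t => [|t IH] /=; first exact: next_wt_eq. by rewrite IH next_wt_eq. Qed.

Lemma fold_ge s :
  (foldr (fun j acc => wt_of (tr_v f i j) + acc)%R 0%R s >=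
   foldr (fun j acc => wt_of (tr_v f' i j) + acc)%R 0%R s)%R.
Proof. elim: s => [|a s IH] /=; first lra. have := wt_ge a; lra. Qed.

Lemma trace_le_main : leT (trace f i) (trace f' i).
Proof.
rewrite /trace /trace_at.
destruct (excluded_middle_informative (exists p, stopb f i p)) as [H|H];
destruct (excluded_middle_informative (exists p, stopb f' i p)) as [H'|H'].
- have -> : ex_minn H = ex_minn H'.
    case: ex_minnP => a Ha Hma; case: ex_minnP => b Hb Hmb.
    apply/eqP; rewrite eqn_leq; apply/andP; split.
    + apply: Hma; by rewrite stop_eq.
    + apply: Hmb; by rewrite -stop_eq.
  move: (ex_minn H') => p.
  have Hall : all (fun q => is_idxb (tr_v f i q)) (iota 0 p) =
              all (fun q => is_idxb (tr_v f' i q)) (iota 0 p).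
    by apply: eq_all => q; rewrite idxb_eq.
  have HS := fold_ge (iota 0 p.+1).
  rewrite /tr_finite_value.
  case: (shape p) => [[k [E1 E2]]|[r1 [r2 [k [E1 [E2 _]]]]]]; rewrite E1 E2;
    case: (split k) => k'; try (by left).
  + rewrite Hall; case: ifP => _; first by left.
    right; left; eexists; eexists; exists k'; split; [reflexivity|split; [reflexivity|exact HS]].
  + right; left; eexists; eexists; exists k'; split; [reflexivity|split; [reflexivity|exact HS]].
- exfalso; first [apply: H'; case: H => p Hp; exists p; by rewrite -stop_eq
   | apply: H; case: H' => p Hp; exists p; by rewrite stop_eq].
- exfalso; first [apply: H'; case: H => p Hp; exists p; by rewrite -stop_eq
   | apply: H; case: H' => p Hp; exists p; by rewrite stop_eq].
- have Hav : Rbar_le (LimInf_seq (wavg f' i)) (LimInf_seq (wavg f i)).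
    apply: LimInf_le; red; exists 0%nat; move=> N _.
    rewrite /wavg; apply: Rmult_le_compat_r.
    + apply: Rlt_le; apply: Rinv_0_lt_compat; apply: lt_0_INR; apply/ltP.
      done.
    + apply: sum_Rle => t _; rewrite /wprime wt_pos_eq; apply: Rge_le; apply: wt_ge.
  destruct (excluded_middle_informative (Rbar_le 0 (LimInf_seq (wavg f i)))) as [A|A];
  destruct (excluded_middle_informative (Rbar_le 0 (LimInf_seq (wavg f' i)))) as [B|B];
  simpl; try (by left).
  all: first [ (right; right; right; done) | (exfalso; apply: A; exact: Rbar_le_trans B Hav) ].
Qed.

End Tr.

Lemma trace_mono (l m n : nat) (f f' : rawhom (l + m) (l + n)) :
  le_hom f f' -> le_hom (trace f) (trace f').
Proof.
move=> Hle i.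
case: (classic (exists j, tr_v f i j = Ex)) => [[j Ej]|HE].
  erewrite trace_Ex; last exact Ej; right; right; left; done.
case: (classic (exists j, tr_v f' i j = All)) => [[j Ej]|HA].
  have -> : trace f' i = All by eapply trace_All; exact Ej. right; right; right; done.
apply: trace_le_main => // j Ej; [apply: HE|apply: HA]; by exists j.
Qed.

Theorem propositionD3 :
  (forall (m l n : nat) (f f' : rawhom m l) (g g' : rawhom l n),
      is_arrow f -> is_arrow f' -> is_arrow g -> is_arrow g' ->
      le_hom f f' -> le_hom g g' -> le_hom (seqcomp f g) (seqcomp f' g'))
  /\
  (forall (m n m' n' : nat) (f f' : rawhom m n) (g g' : rawhom m' n'),
      is_arrow f -> is_arrow f' -> is_arrow g -> is_arrow g' ->
      le_hom f f' -> le_hom g g' -> le_hom (osum f g) (osum f' g'))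
  /\
  (forall (l m n : nat) (f f' : rawhom (l + m) (l + n)),
      is_arrow f -> is_arrow f' ->
      le_hom f f' -> le_hom (trace f) (trace f')).
Proof.
split; [|split].
- move=> *; exact: seq_mono.
- move=> *; exact: osum_mono.
- move=> *; exact: trace_mono.
Qed.
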